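(* Let $(\mathcal{X},\rho)$ be a length space and $\eta:\mathcal{X}\to\mathcal{Y}$ a function. Then for every $x\in\mathcal{X}$, $\mathrm{margin}_\eta(x)=\rho(x,\partial_\eta\mathcal{X})$.
   Context: A length space: $\rho(x,x')=\inf_\gamma\ell(\gamma)$ over continuous paths $\gamma:[0,1]\to\mathcal{X}$ from $x$ to $x'$, $\ell(\gamma)$ denoting path length. $\mathrm{margin}_\eta(x)=\inf\{\rho(x,x'):\eta(x')\ne\eta(x)\}$, $\partial_\eta\mathcal{X}=\{x:\mathrm{margin}_\eta(x)=0\}$, and $\rho(x,Z)=\inf_{z\in Z}\rho(x,z)$. *)

(* Defs.v *)
(* R : realType, extended reals \bar R for infima
   (so that inf of the empty set is +oo). *)
From HB Require Import structures.
From mathcomp Require Import all_boot all_order all_algebra.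
From mathcomp Require Import all_classical all_reals all_analysis.
Set Implicit Arguments. Unset Strict Implicit. Unset Printing Implicit Defensive.
Import Order.TTheory GRing.Theory Num.Theory.
Local Open Scope classical_set_scope.
Local Open Scope ring_scope.

Section LengthSpace.
Variables (R : realType) (X : Type).

Definition is_metric (rho : X -> X -> R) : Prop :=
  (forall x y, 0 <= rho x y) /\
  (forall x y, rho x y = 0 <-> x = y) /\
  (forall x y, rho x y = rho y x) /\
  (forall x y z, rho x z <= rho x y + rho y z).

Definition cont01 (rho : X -> X -> R) (g : R -> X) : Prop :=
  forall t, 0 <= t <= 1 -> forall e : R, 0 < e ->
    exists2 d : R, 0 < d & forall s, 0 <= s <= 1 -> `|s - t| < d ->
      rho (g s) (g t) < e.

Definition is_path (rho : X -> X -> R) (g : R -> X) (x x' : X) : Prop :=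
  cont01 rho g /\ g 0 = x /\ g 1 = x'.

Definition partition01 (n : nat) (t : nat -> R) : Prop :=
  t 0%N = 0 /\ t n = 1 /\ (forall i, (i < n)%N -> t i <= t i.+1).

Definition path_length (rho : X -> X -> R) (g : R -> X) : \bar R :=
  ereal_sup [set (\sum_(i < nt.1) rho (g (nt.2 i)) (g (nt.2 i.+1)))%:E
            | nt in [set nt : nat * (nat -> R) | partition01 nt.1 nt.2]].

Definition length_space (rho : X -> X -> R) : Prop :=
  is_metric rho /\
  forall x x', (rho x x')%:E =
    ereal_inf [set path_length rho g | g in [set g | is_path rho g x x']].

Definition dist_set (rho : X -> X -> R) (x : X) (Z : set X) : \bar R :=
  ereal_inf [set (rho x z)%:E | z in Z].

Definition margin (Y : Type) (rho : X -> X -> R) (eta : X -> Y) (x : X)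
  : \bar R :=
  dist_set rho x [set x' | eta x' <> eta x].

Definition boundary (Y : Type) (rho : X -> X -> R) (eta : X -> Y) : set X :=
  [set x | margin rho eta x = 0%E].

End LengthSpace.

(* Main.v *)
Require Import Defs.
From mathcomp Require Import all_boot all_order all_algebra.
From mathcomp Require Import all_classical all_reals all_analysis.
From Stdlib Require Import Classical.
From mathcomp Require Import lra.
Set Implicit Arguments. Unset Strict Implicit. Unset Printing Implicit Defensive.
Import Order.TTheory GRing.Theory Num.Theory.
Local Open Scope classical_set_scope.
Local Open Scope ring_scope.

Section L9.
Variables (R : realType) (X Y : Type) (rho : X -> X -> R) (eta : X -> Y).

Lemma margin_ge0 (hm : is_metric rho) z : (0 <= margin rho eta z)%E.
Proof.
apply/ereal_infP => _ [w _ <-]; rewrite lee_fin; exact: hm.1.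
Qed.

Lemma margin0 (hm : is_metric rho) z :
  (forall e : R, 0 < e -> exists w, eta w <> eta z /\ rho z w < e) ->
  boundary rho eta z.
Proof.
move=> H; rewrite /boundary /=; apply/le_anti; rewrite margin_ge0 // andbT.
apply/lee_addgt0Pr => e e0; rewrite add0e.
have [w [hw hr]] := H e e0.
apply: le_trans (ereal_inf_lbound _) _; first by exists w.
by rewrite lee_fin ltW.
Qed.

Lemma margin_le (hm : is_metric rho) x z :
  boundary rho eta z -> (margin rho eta x <= (rho x z)%:E)%E.
Proof.
move=> Bz.
case: (classic (eta z = eta x)) => hz; last first.
  by apply: ereal_inf_lbound; exists z.
apply/lee_addgt0Pr => e e0.
have : (margin rho eta z < e%:E)%E by rewrite /boundary /= in Bz; rewrite Bz lte_fin.
move=> /ereal_inf_lt [_ [w hw <-]]; rewrite lte_fin => hr.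
apply: le_trans (ereal_inf_lbound _) _.
  exists w => //=; by rewrite -hz.
rewrite -EFinD lee_fin.
have [_ [_ [_ tri]]] := hm.
apply: le_trans (tri x z w) _; lra.
Qed.


Lemma key (hL : length_space rho) x x' e : eta x' <> eta x -> 0 < e ->
  exists z, boundary rho eta z /\ rho x z <= rho x x' + e.
Proof.
move=> hx' e0.
have [hm hl] := hL.
have hm' := hm; move: hm' => [h0 [heq [hsym htri]]].
have : (ereal_inf [set path_length rho g | g in [set g | is_path rho g x x']]
          < (rho x x' + e)%:E)%E by rewrite -hl lte_fin; lra.
move=> /ereal_inf_lt [_ [g [gc [g0 g1]] <-]] hlen.
pose S := [set t : R | (0 <= t <= 1) /\ forall s, 0 <= s <= t -> eta (g s) = eta x].
have S0 : S 0.
  split; first by rewrite lexx ler01.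
  move=> s /andP[s0 s1]; have -> : s = 0 by apply/le_anti; rewrite s0 s1.
  by rewrite g0.
have Sub : ubound S 1 by move=> t [/andP[_ ->]].
have hS : has_sup S by split; [exists 0 | exists 1].
pose ts := sup S.
have ts0 : 0 <= ts by apply: sup_upper_bound.
have ts1 : ts <= 1 by apply: ge_sup => //; exists 0.
have below : forall s, 0 <= s -> s < ts -> eta (g s) = eta x.
  move=> s s0 sts.
  have [t [_ Ht] ht] := sup_adherent (eps := ts - s) ltac:(by rewrite subr_gt0) hS.
  apply: Ht; rewrite s0 /=; rewrite -/ts in ht; lra.
exists (g ts); split.
  apply: margin0 => // e' e'0.
  have [d d0 Hd] := gc ts ltac:(by rewrite ts0 ts1) e' e'0.
  case: (classic (eta (g ts) = eta x)) => hz.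
    have ts1' : ts < 1.
      rewrite lt_neqAle ts1 andbT; apply/eqP => E; apply: hx'.
      by rewrite -g1 -E.
    apply: NNPP => Hn.
    pose d' := Num.min (d / 2) (1 - ts).
    have d'0 : 0 < d' by rewrite lt_min; apply/andP; split; lra.
    have d'1 : d' <= d / 2 by rewrite ge_min lexx.
    have d'2 : d' <= 1 - ts by rewrite ge_min lexx orbT.
    have : S (ts + d').
      split; first by apply/andP; split; lra.
      move=> s /andP[s0 s1].
      case: (ltgtP s ts) => hs.
      - exact: below.
      - apply: NNPP => hn; apply: Hn; exists (g s); split.
          by rewrite hz.
        rewrite hsym; apply: Hd; first by apply/andP; split; lra.
        rewrite ger0_norm; lra.
      - by rewrite hs.
    move=> H; have := sup_upper_bound hS H; rewrite -/ts; lra.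
  have tsp : 0 < ts.
    rewrite lt_neqAle ts0 andbT; apply/eqP => E; apply: hz.
    by rewrite -E g0.
  pose s := Num.max 0 (ts - d / 2).
  have s0 : 0 <= s by rewrite le_max lexx.
  have s1 : s < ts by rewrite gt_max; apply/andP; split; lra.
  have s2 : ts - d / 2 <= s by rewrite le_max lexx orbT.
  exists (g s); split; first by rewrite (below s) // => /esym.
  rewrite hsym; apply: Hd; first by apply/andP; split; lra.
  rewrite ler0_norm; lra.
pose t := fun i : nat => if i is 0%N then 0 else if i is 1%N then ts else 1.
have : ((\sum_(i < 2) rho (g (t i)) (g (t i.+1)))%:E <= path_length rho g)%E.
  apply: ereal_sup_ubound; exists (2%N, t) => //.
  split => //; split => //.
  case=> [|[|]]//= _; lra.
rewrite big_ord_recr big_ord_recr big_ord0 /= add0r -g0 => hle.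
have : ((rho (g 0) (g ts) + rho (g ts) (g 1))%:E < (rho (g 0) x' + e)%:E)%E.
  by apply: le_lt_trans hle _; rewrite g0.
rewrite lte_fin g1 => hh.
have := h0 (g ts) x'; lra.
Qed.

Theorem lemma9_aux (hL : length_space rho) x :
  margin rho eta x = dist_set rho x (boundary rho eta).
Proof.
have hm := hL.1.
apply/le_anti/andP; split.
  by apply/ereal_infP => _ [z Bz <-]; exact: margin_le.
apply/ereal_infP => _ [x' hx' <-]; apply/lee_addgt0Pr => e e0.
have [z [Bz hz]] := key hL hx' e0.
apply: le_trans (ereal_inf_lbound _) _; first by exists z.
by rewrite -EFinD lee_fin.
Qed.

End L9.

Theorem lemma9 (R : realType) (X Y : Type) (rho : X -> X -> R)
  (eta : X -> Y) (hL : length_space rho) :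
  forall x : X, margin rho eta x = dist_set rho x (boundary rho eta).
Proof. move=> x; exact: lemma9_aux. Qed.
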